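(* The group $\Phi_L$, viewed as a subgroup of ${\rm PGL}_3(\mathbb{Q}_2)$, is torsion-free.
   Context: Let $\mathcal{O}$ be the ring of integers of $\mathbb{Q}(\sqrt{-7})$, $\Gamma_L$ the unitary group of the standard Hermitian lattice $\mathcal{O}[\tfrac12]^3$ (standard Hermitian form $\sum x_i\bar y_i$), and $P\Gamma_L$ its quotient by scalars; a fixed embedding $\mathcal{O}\to\mathbb{Z}_2$ identifies $P\Gamma_L$ with a lattice in ${\rm PGL}_3(\mathbb{Q}_2)$. With $\theta=\sqrt{-7}$, the Hermitian form induces a nondegenerate symmetric bilinear form on $\mathcal{O}[\tfrac12]^3/\theta\mathcal{O}[\tfrac12]^3\cong\mathbb{F}_7^3$, yielding a homomorphism $\Gamma_L\to{\rm O}_3(7)$ and hence $P\Gamma_L\to{\rm PO}_3(7)\cong{\rm PGL}_2(7)$. $\Phi_L$ is the kernel of this homomorphism $P\Gamma_L\to{\rm PGL}_2(7)$. *)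

(* Defs.v *)
(* Model Q(sqrt -7) inside the algebraic complex numbers algC. *)
From mathcomp Require Import all_boot all_order all_algebra all_field.
Set Implicit Arguments. Unset Strict Implicit. Unset Printing Implicit Defensive.
Import Order.TTheory GRing.Theory Num.Theory.
Local Open Scope ring_scope.

(* theta = sqrt(-7) (either square root gives the same ring O[1/2]). *)
Definition theta : algC := sqrtC (- 7%:R).

Definition dyadic (x : algC) : Prop :=
  exists (m : int) (k : nat), x = m%:~R / 2%:R ^+ k.

(* O[1/2] = Z[1/2] + Z[1/2] theta, where O is the ring of integers of Q(sqrt -7)
   (O = Z[(1+theta)/2], so O[1/2] = Z[1/2][theta]). *)
Definition in_O2 (x : algC) : Prop :=
  exists a b : algC, [/\ dyadic a, dyadic b & x = a + b * theta].

Definition ctrmx (g : 'M[algC]_3) : 'M[algC]_3 := \matrix_(i, j) (g j i)^*.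

(* Gamma_L : unitary group of the standard Hermitian lattice O[1/2]^3 *)
Definition in_GammaL (g : 'M[algC]_3) : Prop :=
  (forall i j, in_O2 (g i j)) /\ g *m ctrmx g = 1%:M.

Definition congr_theta (x y : algC) : Prop :=
  exists z, in_O2 z /\ x - y = theta * z.

(* g in Gamma_L represents an element of Phi_L: its reduction mod theta in
   O_3(7) is a scalar, i.e. +I or -I (trivial image in PO_3(7) = PGL_2(7)). *)
Definition lifts_PhiL (g : 'M[algC]_3) : Prop :=
  in_GammaL g /\
  exists s : bool, forall i j : 'I_3,
      congr_theta (g i j) ((-1) ^+ s * (i == j)%:R).

(* g represents the identity of P Gamma_L (= Gamma_L / scalars) *)
Definition is_scalar (g : 'M[algC]_3) : Prop := exists c : algC, g = c%:M.

(* Main.v *)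
Require Import Defs.
From mathcomp Require Import all_boot all_order all_algebra all_field.
From mathcomp Require Import ring lra zify.
Import GRing.Theory Num.Theory.
Set Implicit Arguments. Unset Strict Implicit.
Local Open Scope ring_scope.

Lemma theta2 : theta ^+ 2 = - 7%:R.
Proof. by rewrite /theta sqrtCK. Qed.

Lemma theta_neq0 : theta != 0.
Proof. apply/eqP => h; have := theta2; rewrite h expr0n /= => /eqP; rewrite eq_sym oppr_eq0 pnatr_eq0. by []. Qed.

Lemma theta_conj : theta^* = - theta.
Proof.
have h1 : theta * theta^* = 7%:R.
  rewrite -normCK -normrX theta2 normrN. by rewrite normr_nat.
apply: (mulfI theta_neq0). rewrite h1 mulrN -expr2 theta2 opprK //.
Qed.

Lemma two_pow_neq0 (k : nat) : (2%:R : algC) ^+ k != 0.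
Proof. by rewrite expf_neq0 // pnatr_eq0. Qed.

Lemma dyadic_int (m : int) : dyadic m%:~R.
Proof. by exists m, 0%N; rewrite expr0 divr1. Qed.

Lemma dyadic_nat (m : nat) : dyadic m%:R.
Proof. by exists m%:Z, 0%N; rewrite expr0 divr1. Qed.

Lemma dyadic0 : dyadic 0.
Proof. exact: (dyadic_nat 0). Qed.

Lemma dyadic1 : dyadic 1.
Proof. exact: (dyadic_nat 1). Qed.

Lemma dyadicD x y : dyadic x -> dyadic y -> dyadic (x + y).
Proof.
move=> [m [k ->]] [m' [k' ->]].
exists (m * 2 ^+ k' + m' * 2 ^+ k), (k + k')%N.
rewrite intrD !intrM !rmorphXn /= exprD.
have h1 := two_pow_neq0 k; have h2 := two_pow_neq0 k'.
field. by rewrite h1 h2.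
Qed.

Lemma dyadicM x y : dyadic x -> dyadic y -> dyadic (x * y).
Proof.
move=> [m [k ->]] [m' [k' ->]].
exists (m * m'), (k + k')%N.
rewrite !intrM exprD.
have h1 := two_pow_neq0 k; have h2 := two_pow_neq0 k'.
field. by rewrite h1 h2.
Qed.

Lemma dyadicN x : dyadic x -> dyadic (- x).
Proof. move=> [m [k ->]]; exists (- m), k; by rewrite intrN mulNr. Qed.

Lemma dyadic_real x : dyadic x -> x^* = x.
Proof.
move=> [m [k ->]]; apply: conj_Creal.
by rewrite realM ?realV ?realX ?realz ?realn.
Qed.
Lemma O2_nat (m : nat) : in_O2 m%:R.
Proof. exists m%:R, 0; split; [exact: dyadic_nat | exact: dyadic0 | by rewrite mul0r addr0]. Qed.
Lemma O2_0 : in_O2 0. Proof. exact: (O2_nat 0). Qed.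
Lemma O2_1 : in_O2 1. Proof. exact: (O2_nat 1). Qed.
Lemma O2_theta : in_O2 theta.
Proof. exists 0, 1; split; [exact: dyadic0 | exact: dyadic1 | by rewrite add0r mul1r]. Qed.
Lemma O2D x y : in_O2 x -> in_O2 y -> in_O2 (x + y).
Proof.
move=> [a [b [ha hb ->]]] [a' [b' [ha' hb' ->]]].
exists (a + a'), (b + b'); split; try exact: dyadicD. ring.
Qed.
Lemma O2N x : in_O2 x -> in_O2 (- x).
Proof.
move=> [a [b [ha hb ->]]]; exists (- a), (- b); split; try exact: dyadicN. ring.
Qed.
Lemma O2B x y : in_O2 x -> in_O2 y -> in_O2 (x - y).
Proof. by move=> hx hy; apply: O2D => //; apply: O2N. Qed.
Lemma O2M x y : in_O2 x -> in_O2 y -> in_O2 (x * y).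
Proof.
move=> [a [b [ha hb ->]]] [a' [b' [ha' hb' ->]]].
exists (a * a' - 7%:R * (b * b')), (a * b' + b * a'); split.
- apply: dyadicD; first exact: dyadicM.
  by apply: dyadicN; apply: dyadicM; [exact: dyadic_nat | exact: dyadicM].
- by apply: dyadicD; apply: dyadicM.
- have t2 := theta2. rewrite -[7%:R]opprK -t2. ring.
Qed.
Lemma O2X x n : in_O2 x -> in_O2 (x ^+ n).
Proof. move=> hx; elim: n => [|n ih]; [exact: O2_1 | rewrite exprS; exact: O2M]. Qed.
Lemma O2Mn x n : in_O2 x -> in_O2 (x *+ n).
Proof. move=> hx; rewrite -mulr_natr; apply: O2M => //; exact: O2_nat. Qed.
Lemma O2_sum (I : finType) (F : I -> algC) : (forall i, in_O2 (F i)) -> in_O2 (\sum_i F i).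
Proof. move=> h; apply: (big_ind in_O2); [exact: O2_0 | exact: O2D | by []]. Qed.

Definition Dv (k : nat) (x : algC) := exists z, in_O2 z /\ x = theta ^+ k * z.

Lemma Dv_O2 k x : Dv k x -> in_O2 x.
Proof. move=> [z [hz ->]]; apply: O2M => //; apply: O2X; exact: O2_theta. Qed.
Lemma Dv0 k : Dv k 0. Proof. exists 0; split; [exact: O2_0 | by rewrite mulr0]. Qed.
Lemma DvD k x y : Dv k x -> Dv k y -> Dv k (x + y).
Proof. move=> [z [hz ->]] [z' [hz' ->]]; exists (z + z'); split; [exact: O2D | by rewrite mulrDr]. Qed.
Lemma DvN k x : Dv k x -> Dv k (- x).
Proof. move=> [z [hz ->]]; exists (- z); split; [exact: O2N | by rewrite mulrN]. Qed.
Lemma DvB k x y : Dv k x -> Dv k y -> Dv k (x - y).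
Proof. by move=> hx hy; apply: DvD => //; apply: DvN. Qed.
Lemma DvMr k x y : Dv k x -> in_O2 y -> Dv k (x * y).
Proof. move=> [z [hz ->]] hy; exists (z * y); split; [exact: O2M | by rewrite mulrA]. Qed.
Lemma DvMl k x y : Dv k x -> in_O2 y -> Dv k (y * x).
Proof. by move=> hx hy; rewrite mulrC; apply: DvMr. Qed.
Lemma DvMM j k x y : Dv j x -> Dv k y -> Dv (j + k) (x * y).
Proof.
move=> [z [hz ->]] [z' [hz' ->]]; exists (z * z'); split; first exact: O2M.
rewrite exprD; ring.
Qed.
Lemma Dv_le j k x : (j <= k)%N -> Dv k x -> Dv j x.
Proof.
move=> hjk [z [hz ->]]; exists (theta ^+ (k - j) * z); split.
  by apply: O2M => //; apply: O2X; exact: O2_theta.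
by rewrite mulrA -exprD subnKC.
Qed.
Lemma Dv_theta k x : in_O2 x -> Dv k (theta ^+ k * x).
Proof. by move=> hx; exists x. Qed.
Lemma Dv_cancel a b y : Dv (a + b) (theta ^+ a * y) -> Dv b y.
Proof.
move=> [z [hz e]]; exists z; split => //.
move: e; rewrite exprD -mulrA => /(mulfI (expf_neq0 a theta_neq0)) //.
Qed.
Lemma Dv_sum k (I : finType) (F : I -> algC) : (forall i, Dv k (F i)) -> Dv k (\sum_i F i).
Proof. move=> h; apply: (big_ind (Dv k)); [exact: Dv0 | exact: DvD | by []]. Qed.
Lemma DvMn k x n : Dv k x -> Dv k (x *+ n).
Proof. move=> hx; rewrite -mulr_natr; apply: DvMr => //; exact: O2_nat. Qed.
Lemma Dv7 k x : Dv k x -> Dv (k + 2) (x * 7%:R).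
Proof.
move=> [z [hz ->]]; exists (- z); split; first exact: O2N.
rewrite exprD -[7%:R]opprK -theta2; ring.
Qed.

Definition U (d : algC) := in_O2 d /\ exists e, in_O2 e /\ Dv 1 (d * e - 1).

Lemma U_cancel d x : U d -> in_O2 x -> Dv 1 (d * x) -> Dv 1 x.
Proof.
move=> [hd [e [he hde]]] hx hdx.
have -> : x = e * (d * x) - (d * e - 1) * x by ring.
apply: DvB; [exact: DvMl | exact: DvMr].
Qed.
Lemma U1 : U 1.
Proof. split; first exact: O2_1. exists 1; split; first exact: O2_1. rewrite mulr1 subrr; exact: Dv0. Qed.
Lemma UM d d' : U d -> U d' -> U (d * d').
Proof.
move=> [hd [e [he hde]]] [hd' [e' [he' hde']]]; split; first exact: O2M.
exists (e * e'); split; first exact: O2M.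
have -> : d * d' * (e * e') - 1 = (d * e - 1) * (d' * e') + (d' * e' - 1) by ring.
apply: DvD => //; apply: DvMr => //; exact: O2M.
Qed.
Lemma UX d n : U d -> U (d ^+ n).
Proof. move=> hd; elim: n => [|n ih]; [exact: U1 | rewrite exprS; exact: UM]. Qed.
Lemma U_nat n : ~~ (7 %| n)%N -> U n%:R.
Proof.
move=> h7; split; first exact: O2_nat.
have [a _ ha] := @Bezoutl 7 n isT.
have hg : gcdn 7 n = 1%N.
  apply/eqP; rewrite -/(coprime 7 n) prime_coprime //.
move: ha; rewrite hg => /dvdnP [q hq].
exists (- a%:R); split; first by apply: O2N; exact: O2_nat.
have -> : (n%:R : algC) * - a%:R - 1 = theta ^+ 2 * q%:R.
  have hq2 : (1 + a * n)%:R = (q * 7)%:R :> algC by rewrite hq.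
  move: hq2; rewrite natrD natrM natrM => hq2.
  rewrite theta2 (_ : - 7%:R * q%:R = - (q%:R * 7%:R)); last by ring.
  rewrite -hq2; ring.
apply: (@Dv_le 1 2) => //; apply: Dv_theta; exact: O2_nat.
Qed.

Lemma normO2 x : in_O2 x -> dyadic (x * x^*).
Proof.
move=> [a [b [ha hb ->]]].
rewrite rmorphD rmorphM /= theta_conj (dyadic_real ha) (dyadic_real hb).
have -> : (a + b * theta) * (a + b * - theta) = a * a + 7%:R * (b * b).
  rewrite -[7%:R]opprK -theta2; ring.
apply: dyadicD; first exact: dyadicM.
apply: dyadicM; [exact: dyadic_nat | exact: dyadicM].
Qed.

Lemma Dv_all x : in_O2 x -> (forall k, Dv k x) -> x = 0.
Proof.
move=> hx hall; apply/eqP; apply/negPn/negP => hx0.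
have [m [j hm]] := normO2 hx.
have hN0 : x * x^* != 0 by rewrite mulf_neq0 // conjC_eq0.
have m0 : m != 0.
  apply/eqP => m0; move: hN0; by rewrite hm m0 mul0r eqxx.
have [z [hz ez]] := hall `|m|%N.
have [u [i hu]] := normO2 hz.
have : x * x^* = 7%:R ^+ `|m|%N * (z * z^*).
  rewrite ez rmorphM rmorphXn /= theta_conj.
  have -> : (theta ^+ `|m|%N * z) * ((- theta) ^+ `|m|%N * z^*) = (theta * - theta) ^+ `|m|%N * (z * z^*).
    rewrite exprMn; ring.
  by rewrite mulrN -expr2 theta2 opprK.
rewrite hm hu => e.
have e2 : (m * 2 ^+ i)%:~R = ((7 ^+ `|m|%N * u * 2 ^+ j)%:~R : algC).
  rewrite !intrM !rmorphXn /=.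
  have h1 := two_pow_neq0 i; have h2 := two_pow_neq0 j.
  have -> : (m%:~R : algC) = (m%:~R / 2%:R ^+ j) * 2%:R ^+ j by rewrite divfK.
  have -> : (u%:~R : algC) = (u%:~R / 2%:R ^+ i) * 2%:R ^+ i by rewrite divfK.
  rewrite e. ring.
move/intr_inj: e2 => /(congr1 absz).
rewrite !abszM !abszX /= => e3.
have hd : (7 ^ `|m| %| `|m| * 2 ^ i)%N by rewrite e3 -mulnA dvdn_mulr.
rewrite Gauss_dvdl ?coprimeXl ?coprimeX // in hd.
- have := dvdn_leq _ hd; rewrite absz_gt0 m0 => /(_ isT).
  by rewrite leqNgt ltn_expl.
by rewrite coprimeXr.
Qed.

Definition MO2 (M : 'M[algC]_3) := forall i j, in_O2 (M i j).
Definition MDv k (M : 'M[algC]_3) := forall i j, Dv k (M i j).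

Lemma mulE (M N : 'M[algC]_3) i j : (M * N) i j = \sum_l M i l * N l j.
Proof. by rewrite -mulmxE mxE. Qed.

Lemma MO2_mul M N : MO2 M -> MO2 N -> MO2 (M * N).
Proof. move=> hM hN i j; rewrite mulE; apply: O2_sum => l; exact: O2M. Qed.
Lemma MDv_mulr k M N : MDv k M -> MO2 N -> MDv k (M * N).
Proof. move=> hM hN i j; rewrite mulE; apply: Dv_sum => l; exact: DvMr. Qed.
Lemma MDv_mull k M N : MDv k M -> MO2 N -> MDv k (N * M).
Proof. move=> hM hN i j; rewrite mulE; apply: Dv_sum => l; exact: DvMl. Qed.
Lemma MDv_MM a b M N : MDv a M -> MDv b N -> MDv (a + b) (M * N).
Proof. move=> hM hN i j; rewrite mulE; apply: Dv_sum => l; exact: DvMM. Qed.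
Lemma MO2_scalar c : in_O2 c -> MO2 c%:M.
Proof. move=> hc i j; rewrite mxE; apply: O2Mn => //. Qed.
Lemma MO2_1 : MO2 1.
Proof. rewrite -idmxE; exact: (MO2_scalar O2_1). Qed.
Lemma MDv0_1 : MDv 0 1.
Proof. move=> i j; exists (1%:M i j); split; [exact: MO2_1 | by rewrite expr0 mul1r]. Qed.
Lemma MO2X M n : MO2 M -> MO2 (M ^+ n).
Proof. move=> hM; elim: n => [|n ih]; [exact: MO2_1 | rewrite exprS; exact: MO2_mul]. Qed.
Lemma MDvX k M n : MDv k M -> MDv (n * k) (M ^+ n).
Proof.
move=> hM; elim: n => [|n ih]; first exact: MDv0_1.
rewrite exprS mulSn; exact: MDv_MM.
Qed.
Lemma MDv_le j k M : (j <= k)%N -> MDv k M -> MDv j M.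
Proof. move=> hjk hM i l; exact: (Dv_le hjk). Qed.
Lemma MDvD k M N : MDv k M -> MDv k N -> MDv k (M + N).
Proof. move=> hM hN i j; rewrite mxE; exact: DvD. Qed.
Lemma MDvN k M : MDv k M -> MDv k (- M).
Proof. move=> hM i j; rewrite mxE; exact: DvN. Qed.
Lemma MDvB k M N : MDv k M -> MDv k N -> MDv k (M - N).
Proof. by move=> hM hN; apply: MDvD => //; apply: MDvN. Qed.
Lemma MDv_sum k (I : finType) (F : I -> 'M[algC]_3) : (forall i, MDv k (F i)) -> MDv k (\sum_i F i).
Proof. move=> h; apply: (big_ind (MDv k)); [by move=> i j; rewrite mxE; exact: Dv0 | exact: MDvD | by []]. Qed.
Lemma MDvMn k M n : MDv k M -> MDv k (M *+ n).
Proof. move=> hM i j; rewrite mulmxnE; exact: DvMn. Qed.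
Lemma MDv7 k M q : MDv k M -> MDv (k + 2) (M *+ (q * 7)).
Proof.
move=> hM i j; rewrite mulmxnE mulrnA -mulr_natr; apply: Dv7; exact: DvMn.
Qed.
Lemma scalarX (d : algC) n : (d%:M : 'M[algC]_3) ^+ n = (d ^+ n)%:M.
Proof.
elim: n => [|n ih]; first by rewrite !expr0 idmxE.
by rewrite !exprS ih scalar_mxM mulmxE.
Qed.
Lemma scalar_comm (d : algC) (M : 'M[algC]_3) : GRing.comm d%:M M.
Proof. by rewrite /GRing.comm -!mulmxE scalar_mxC. Qed.
Lemma scalar_mul (d : algC) (M : 'M[algC]_3) : d%:M * M = d *: M.
Proof. by rewrite -mulmxE mul_scalar_mx. Qed.

Lemma MDv_scalel k (c : algC) M : in_O2 c -> MDv k M -> MDv k (c *: M).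
Proof. move=> hc hM i j; rewrite mxE; exact: DvMl. Qed.

Lemma congrX g d m : MO2 g -> in_O2 d -> MDv 1 (g - d%:M) -> MDv 1 (g ^+ m - (d ^+ m)%:M).
Proof.
move=> hg hd h; elim: m => [|m ih].
  by rewrite !expr0 idmxE subrr => i j; rewrite mxE; exact: Dv0.
have -> : g ^+ m.+1 - (d ^+ m.+1)%:M = (g - d%:M) * g ^+ m + d%:M * (g ^+ m - (d ^+ m)%:M).
  by rewrite !exprS scalar_mxM mulmxE mulrBl mulrBr addrA subrK.
apply: MDvD; first by apply: MDv_mulr => //; exact: MO2X.
apply: MDv_mull => //; exact: MO2_scalar.
Qed.

Lemma expand d h n k (b : bool) : in_O2 d -> MDv k h -> (1 <= k)%N -> (0 < n)%N ->
  (if b then n == 7 else ~~ (7 %| n)%N) ->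
  MDv (k + (if b then 3 else 1))
    ((d%:M + h) ^+ n - (d ^+ n)%:M - (d ^+ n.-1 * n%:R) *: h).
Proof.
move=> hd hh hk; case: n => [//|n'] _ hb.
rewrite exprDn_comm; last exact: scalar_comm.
rewrite big_ord_recl big_ord_recl /=.
rewrite subn0 expr0 mulr1 bin0 mulr1n scalarX.
rewrite subn1 /= expr1 bin1 scalarX scalar_mul scalerMnl -[d ^+ n' *+ n'.+1]mulr_natr.
set S := \sum_(i < n') _.
rewrite [(d ^+ n'.+1)%:M + _]addrC addrK addrAC subrr add0r.
apply: MDv_sum => i.
rewrite scalarX scalar_mul.
have hi : MDv (bump 0 (bump 0 i) * k) (h ^+ bump 0 (bump 0 i)) by apply: MDvX.
rewrite /bump /= !add1n in hi *.
case: b hb => hb.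
- move/eqP: hb => [hn']; subst n'.
  have [hlt | hge] := ltnP i.+2 7.
  + have hdv : (7 %| 'C(7, i.+2))%N by apply: prime_dvd_bin.
    rewrite -(divnK hdv).
    apply: (@MDv_le _ (i.+2 * k + 2)); last first.
      by apply: MDv7; apply: MDv_scalel; first exact: O2X.
    rewrite !mulSn; lia.
  + have hi6 : i = 5 :> nat by have := ltn_ord i; lia.
    apply: MDvMn; apply: MDv_scalel; first exact: O2X.
    apply: (@MDv_le _ (i.+2 * k)) => //. rewrite hi6; lia.
- apply: MDvMn; apply: MDv_scalel; first exact: O2X.
  apply: (@MDv_le _ (i.+2 * k)) => //. rewrite mulSn mulSn; lia.
Qed.

Lemma lead_cancel (b : bool) n d x : U d -> in_O2 x -> (if b then n == 7 else ~~ (7 %| n)%N) ->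
  Dv (if b then 3 else 1) (d ^+ n.-1 * n%:R * x) -> Dv 1 x.
Proof.
move=> hd hx; case: b => hb.
- move/eqP: hb => -> /= hD.
  have e : d ^+ 6 * 7%:R * x = theta ^+ 2 * (- (d ^+ 6 * x)).
    rewrite theta2; ring.
  rewrite e in hD; have := @Dv_cancel 2 1 _ hD => /DvN; rewrite opprK => h1.
  apply: (U_cancel (UX 6 hd)) => //.
- move=> hD; apply: (U_cancel _ hx hD).
  by apply: UM; [exact: UX | exact: U_nat].
Qed.

Lemma U_congr d y : U d -> in_O2 y -> Dv 1 (y - d) -> U y.
Proof.
move=> [hd [e [he hde]]] hy hyd; split => //; exists e; split => //.
have -> : y * e - 1 = (d * e - 1) + (y - d) * e by ring.
apply: DvD => //; exact: DvMr.
Qed.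

Lemma step g n c d k (b : bool) : MO2 g -> g ^+ n = c%:M -> (0 < n)%N ->
  (if b then n == 7 else ~~ (7 %| n)%N) -> U d -> (1 <= k)%N ->
  MDv k (g - d%:M) -> exists d', U d' /\ MDv k.+1 (g - d'%:M).
Proof.
move=> hg hgn hn hb hd hk hh.
set h := g - d%:M.
have hdO : in_O2 d by case: hd.
have hexp := expand hdO hh hk hn hb.
have eg : g = d%:M + h by rewrite /h addrC subrK.
rewrite -eg hgn in hexp.
set m := d ^+ n.-1 * n%:R.
have hmO : in_O2 m by apply: O2M; [exact: O2X | exact: O2_nat].
have tk : theta ^+ k != 0 by exact: expf_neq0 theta_neq0.
pose A i j := (theta ^+ k)^-1 * h i j.
have hA : forall i j, h i j = theta ^+ k * A i j.
  by move=> i j; rewrite /A mulrA divff // mul1r.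
have hAO : forall i j, in_O2 (A i j).
  move=> i j; have [z [hz ez]] := hh i j; by rewrite /A ez mulKf.
have hR : forall i j, Dv (k + (if b then 3 else 1))
     ((c - d ^+ n) *+ (i == j) - theta ^+ k * (m * A i j)).
  move=> i j; have := hexp i j; rewrite !mxE.
  have -> : g i j - d *+ (i == j) = theta ^+ k * A i j by rewrite -hA /h !mxE.
  by rewrite mulrnBl -/m mulrCA.
have off : forall i j, i != j -> Dv 1 (A i j).
  move=> i j hij; have := hR i j; rewrite (negbTE hij) mulr0n sub0r => /DvN.
  rewrite opprK => /Dv_cancel h1; apply: (lead_cancel hd (hAO i j) hb).
  by rewrite -/m.
have diag : forall i j, Dv 1 (A i i - A j j).
  move=> i j; have := DvB (hR j j) (hR i i); rewrite !eqxx.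
  have -> : (c - d ^+ n) *+ true - theta ^+ k * (m * A j j) -
     ((c - d ^+ n) *+ true - theta ^+ k * (m * A i i)) = theta ^+ k * (m * (A i i - A j j)) by ring.
  move=> /Dv_cancel h1; apply: (lead_cancel hd _ hb); first by apply: O2B.
  by rewrite -/m.
exists (d + theta ^+ k * A 0 0); split.
  apply: (U_congr hd).
    by apply: O2D => //; apply: O2M => //; apply: O2X; exact: O2_theta.
  rewrite addrC addKr.
  apply: (@Dv_le 1 k) => //; apply: Dv_theta; exact: hAO.
move=> i j.
have -> : (g - (d + theta ^+ k * A 0 0)%:M) i j = theta ^+ k * (A i j - A 0 0 *+ (i == j)).
  rewrite mxE [g i j](_ : _ = d *+ (i == j) + h i j); last first.
    by rewrite /h !mxE [RHS]addrC subrK.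
  rewrite hA !mxE; case: (i == j); rewrite ?mulr1n ?mulr0n; ring.
rewrite -addn1; apply: DvMM.
  by exists 1; split; [exact: O2_1 | rewrite mulr1].
case: (eqVneq i j) => [<-|hij].
- rewrite mulr1n; exact: diag.
- rewrite mulr0n subr0; exact: off.
Qed.


Lemma core g n c d (b : bool) : MO2 g -> g ^+ n = c%:M -> (0 < n)%N ->
  (if b then n == 7 else ~~ (7 %| n)%N) -> U d -> MDv 1 (g - d%:M) -> is_scalar g.
Proof.
move=> hg hgn hn hb hd h1.
have hall : forall k, exists d', U d' /\ MDv k.+1 (g - d'%:M).
  elim=> [|k [d' [hd' hk]]]; first by exists d.
  exact: (step hg hgn hn hb hd' _ hk).
have off : forall i j, i != j -> g i j = 0.
  move=> i j hij; apply: Dv_all; first exact: hg.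
  move=> k; have [d' [_ hk]] := hall k.
  have := hk i j; rewrite !mxE (negbTE hij) mulr0n subr0.
  exact: Dv_le.
have dg : forall i j, g i i = g j j.
  move=> i j; apply/eqP; rewrite -subr_eq0; apply/eqP.
  apply: Dv_all; first by apply: O2B.
  move=> k; have [d' [_ hk]] := hall k.
  have := DvB (hk i i) (hk j j); rewrite !mxE !eqxx !mulr1n.
  rewrite (_ : g i i - d' - (g j j - d') = g i i - g j j); last by ring.
  exact: Dv_le.
exists (g 0 0); apply/matrixP => i j; rewrite mxE.
case: (eqVneq i j) => [<-|hij]; first by rewrite mulr1n.
by rewrite mulr0n off.
Qed.

Lemma main g n d : MO2 g -> U d -> MDv 1 (g - d%:M) -> (0 < n)%N ->
  is_scalar (g ^+ n) -> is_scalar g.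
Proof.
elim/ltn_ind: n g d => n ih g d hg hd h1 hn [c hc].
case h7: (7 %| n)%N; last first.
  by apply: (@core g n c d false) => //; rewrite h7.
have hdO : in_O2 d by case: hd.
move/dvdnP: h7 => [m hm].
have hm0 : (0 < m)%N by move: hn; rewrite hm; case: m {hm}.
have hs7 : is_scalar (g ^+ 7).
  apply: (@ih m _ (g ^+ 7) (d ^+ 7)).
  - rewrite hm; lia.
  - exact: MO2X.
  - exact: UX.
  - exact: congrX.
  - exact: hm0.
  - by exists c; rewrite -exprM mulnC -hm.
have [c7 hc7] := hs7.
exact: (@core g 7 c7 d true).
Qed.

Theorem lemma2p1 (g : 'M[algC]_3) (n : nat) :
  lifts_PhiL g -> (0 < n)%N -> is_scalar (g ^+ n) -> is_scalar g.
Proof.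
move=> [[hO _] [s hs]] hn hsc.
apply: (@main g n ((-1) ^+ s)) => //.
- split; first by apply: O2X; apply: O2N; exact: O2_1.
  exists ((-1) ^+ s); split; first by apply: O2X; apply: O2N; exact: O2_1.
  rewrite -exprMn mulrNN mulr1 expr1n subrr; exact: Dv0.
- move=> i j; have [z [hz ez]] := hs i j.
  rewrite !mxE -mulr_natr ez; exists z; split => //; by rewrite expr1.
Qed.
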